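(* Let $n>1$, let $R\in\mathbb{R}^{n\times n}$ be any matrix, let $C\in\mathbb{R}_{\geq 0}^{n\times n}$ be column-stochastic ($\mathbf{1}^\top C=\mathbf{1}^\top$), and let $\gamma>0$. Let ${\bm x}_0\in\mathbb{R}^n$, ${\bm s}_0=\mathbf{0}$, and let $(\check{\bm x}_k)_{k\ge 0}$, $(\check{\bm s}_k)_{k\ge0}$ be arbitrary sequences in $\mathbb{R}^n$ (the quantized values transmitted by the agents). Define for $k\in\mathbb{Z}_{\ge 0}$ \[ {\bm x}_{k+1} = {\bm x}_k + \gamma{\bm s}_k + (R-I)\check{\bm x}_k,\qquad {\bm s}_{k+1} = {\bm x}_k - {\bm x}_{k+1} + {\bm s}_k + (C-I)\check{\bm s}_k . \] Then for all $k\in\mathbb{Z}_{\geq 0}$, $\mathbf{1}^{\top}({\bm x}_k+{\bm s}_k)=\mathbf{1}^{\top}{\bm x}_0$; in particular the quantity $\frac1n\mathbf{1}^\top({\bm x}_k+{\bm s}_k)$ equals the initial average $\frac1n\mathbf{1}^\top{\bm x}_0$ for all $k$.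
   Context: In the paper, $R$ is the row-stochastic ''pull'' matrix with $r_{ji}=1/(1+d_j^{\mathrm{in}})$ for $v_i$ an in-neighbor of $v_j$ or $i=j$ (and $0$ otherwise), $C$ is the column-stochastic ''push'' matrix with $c_{lj}=1/(1+d_j^{\mathrm{out}})$ for $v_l$ an out-neighbor of $v_j$ or $l=j$ (and $0$ otherwise), on a directed graph with $n$ nodes; $\check{\bm x}_k,\check{\bm s}_k$ are quantized versions of ${\bm x}_k,{\bm s}_k$. $\mathbf{1}$ is the all-ones vector. *)

(* Defs.v *)
From HB Require Import structures.
From mathcomp Require Import all_boot all_order all_algebra.
From mathcomp Require Import reals.
Set Implicit Arguments. Unset Strict Implicit. Unset Printing Implicit Defensive.
Import Order.TTheory GRing.Theory Num.Theory.
Local Open Scope ring_scope.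

Definition nonneg_mx (K : realType) (n : nat) (C : 'M[K]_n) : Prop :=
  forall i j, 0 <= C i j.

Definition col_stochastic (K : realType) (n : nat) (C : 'M[K]_n) : Prop :=
  (const_mx 1 : 'rV[K]_n) *m C = const_mx 1.

(* Main.v *)
Require Import Defs.
From HB Require Import structures.
From mathcomp Require Import all_boot all_order all_algebra.
From mathcomp Require Import reals.
Import Order.TTheory GRing.Theory Num.Theory.
Local Open Scope ring_scope.

Theorem lemma1 (K : realType) (n : nat) (Rm C : 'M[K]_n) (gamma : K)
  (x s xq sq : nat -> 'cV[K]_n) :
  (1 < n)%N ->
  nonneg_mx C -> col_stochastic C ->
  0 < gamma ->
  s 0%N = 0 ->
  (forall k : nat, x k.+1 = x k + gamma *: s k + (Rm - 1%:M) *m xq k) ->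
  (forall k : nat, s k.+1 = x k - x k.+1 + s k + (C - 1%:M) *m sq k) ->
  forall k : nat,
    (const_mx 1 : 'rV[K]_n) *m (x k + s k) = (const_mx 1 : 'rV[K]_n) *m x 0%N
    /\ n%:R^-1 *: ((const_mx 1 : 'rV[K]_n) *m (x k + s k))
       = n%:R^-1 *: ((const_mx 1 : 'rV[K]_n) *m x 0%N).
Proof.
move=> _ _ hC _ hs0 _ hs k.
suff H : (const_mx 1 : 'rV[K]_n) *m (x k + s k) = (const_mx 1 : 'rV[K]_n) *m x 0%N.
  by split; rewrite ?H.
elim: k => [|k IH]; first by rewrite hs0 addr0.
rewrite hs.
have -> : x k.+1 + (x k - x k.+1 + s k + (C - 1%:M) *m sq k)
   = (x k + s k) + (C - 1%:M) *m sq k.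
  by rewrite !addrA [x k.+1 + x k]addrC addrK.
rewrite mulmxDr IH mulmxA mulmxBr hC mulmx1 subrr mul0mx addr0 //.
Qed.
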